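(* Let $p\ge 0.5$ and assume that for every $x\in\mathcal X$ the minimum below is attained. The optimal cost CF algorithm $$A_{\mathrm{OC}}(x)=\operatorname*{argmin}_{x'\in\mathcal X:\ m(x')\ge p} c(x,x'),$$ where ties among minimizers are broken by a fixed deterministic rule (a fixed total order on $\mathcal X$, independent of $x$), is IPF stable globally.
   Context: Input space $\mathcal X=\mathcal X_1\times\cdots\times\mathcal X_D$, where each feature $d$ is either categorical ($\mathcal X_d$ a finite set) or numerical ($\mathcal X_d\subseteq\mathbb R$). A model is a function $m:\mathcal X\to[0,1]$. Cost: $c(x,x')=\sum_{d=1}^D c_d(x_d,x'_d)$ with $c_d(x_d,x'_d)=\mathbb 1\{x_d\neq x'_d\}$ for categorical $d$ and $c_d(x_d,x'_d)=|F_d(x_d)-F_d(x'_d)|$ for numerical $d$, where $F_d$ is a fixed cumulative distribution function (nondecreasing) of feature $d$. A CF algorithm $A$ maps each $x\in\mathcal X$ to a probability distribution over $\mathcal X$; $A$ is deterministic at $x$ if this distribution is a point mass, written $A(x)$. $\Phi(x,x')$ denotes the set of all $w\in\mathcal X$ such that for each numerical $d$, $w_d$ lies in the closed interval between $x_d$ and $x'_d$, and for each categorical $d$, $w_d\in\{x_d,x'_d\}$. IPF stable: $A$ is IPF stable at $x$ if (1) $A$ is deterministic at $x$, and (2) for all $w\in\Phi(x,A(x))$, $A$ is deterministic at $w$ and $A(w)=A(x)$. $A$ is IPF stable globally if it is IPF stable at every $x\in\mathcal X$. *)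

(* Defs.v *)
From HB Require Import structures.
From mathcomp Require Import all_boot all_order all_algebra.
From mathcomp Require Import all_classical all_reals all_analysis.
Set Implicit Arguments. Unset Strict Implicit. Unset Printing Implicit Defensive.
Import Order.TTheory GRing.Theory Num.Theory.
Import numFieldNormedType.Exports.
Local Open Scope classical_set_scope.
Local Open Scope ring_scope.

Section CF.
Variable R : realType.

Definition is_cdf (F : R -> R) : Prop :=
  [/\ {homo F : x y / x <= y},
      F x @[x --> -oo] --> (0:R),
      F x @[x --> +oo] --> (1:R) &
      forall x : R, F y @[y --> x^'+] --> F x].

Inductive kind :=
| Categorical (T : finType)
| Numerical (Xd : set R) (F : R -> R).

Definition fty (k : kind) : Type :=
  match k with
  | Categorical T => T
  | Numerical Xd _ => {r : R | Xd r}
  end.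

Definition cost_d (k : kind) : fty k -> fty k -> R :=
  match k return fty k -> fty k -> R with
  | Categorical T => fun a b => if a == b then 0 else 1
  | Numerical Xd F => fun a b => `|F (proj1_sig a) - F (proj1_sig b)|
  end.

Definition between_d (k : kind) : fty k -> fty k -> fty k -> Prop :=
  match k return fty k -> fty k -> fty k -> Prop with
  | Categorical T => fun a b w => w = a \/ w = b
  | Numerical Xd F => fun a b w =>
      Num.min (proj1_sig a) (proj1_sig b) <= proj1_sig w <=
      Num.max (proj1_sig a) (proj1_sig b)
  end.

Definition kind_ok (k : kind) : Prop :=
  match k with
  | Categorical _ => True
  | Numerical _ F => is_cdf F
  end.

Variable D : nat.
Variable K : 'I_D -> kind.

Definition X := forall d : 'I_D, fty (K d).

Definition cost (x x' : X) : R := \sum_(d < D) cost_d (x d) (x' d).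

Definition Phi (x x' : X) : set X :=
  [set w | forall d : 'I_D, between_d (x d) (x' d) (w d)].

(* IPF stability, for a deterministic CF algorithm A : X -> X
   (A(x) is the point-mass output at x). *)
Definition IPF_stable_at (A : X -> X) (x : X) : Prop :=
  forall w, Phi x (A x) w -> A w = A x.

Definition IPF_stable (A : X -> X) : Prop := forall x, IPF_stable_at A x.

Definition total_order (le : X -> X -> Prop) : Prop :=
  [/\ forall x, le x x,
      forall x y, le x y -> le y x -> x = y,
      forall x y z, le x y -> le y z -> le x z &
      forall x y, le x y \/ le y x].

Definition is_optimal_cost_alg (m : X -> R) (p : R) (le : X -> X -> Prop)
    (A : X -> X) : Prop :=
  forall x,
    [/\ p <= m (A x),
        forall y, p <= m y -> cost x (A x) <= cost x y &
        forall y, p <= m y -> cost x y = cost x (A x) -> le (A x) y].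

End CF.

(* Main.v *)
Require Import Defs.
From HB Require Import structures.
From mathcomp Require Import all_boot all_order all_algebra.
From mathcomp Require Import all_classical all_reals all_analysis.
From mathcomp Require Import lra.
Import Order.TTheory GRing.Theory Num.Theory.
Local Open Scope ring_scope.

Lemma cost_d_tri (R : realType) (k : kind R) (a b c : fty k) :
  cost_d a c <= cost_d a b + cost_d b c.
Proof.
case: k a b c => [T|Xd F] a b c /=.
- have [->|ac] := eqVneq a c.
    by rewrite ?eqxx; case: (_ == _); case: (_ == _); lra.
  rewrite ?(negbTE ac); have [ab|ab] := eqVneq a b.
    by rewrite ab in ac *; rewrite ?eqxx ?(negbTE ac); lra.
  by rewrite ?(negbTE ab); case: (_ == _); lra.
- apply: le_trans (ler_normD _ _); by rewrite addrA subrK.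
Qed.

Lemma abs_mid (R : realType) (u v t : R) :
  Num.min u t <= v <= Num.max u t -> `|u - v| + `|v - t| = `|u - t|.
Proof.
case: (leP u t) => ut /andP[h1 h2].
- idtac.
  have e1 : u - v <= 0 by rewrite subr_le0.
  have e2 : v - t <= 0 by rewrite subr_le0.
  have e3 : u - t <= 0 by rewrite subr_le0.
  rewrite (ler0_norm e1) (ler0_norm e2) (ler0_norm e3); lra.
- have ut' : t <= u by exact: ltW.
  idtac.
  have e1 : 0 <= u - v by rewrite subr_ge0.
  have e2 : 0 <= v - t by rewrite subr_ge0.
  have e3 : 0 <= u - t by rewrite subr_ge0.
  rewrite (ger0_norm e1) (ger0_norm e2) (ger0_norm e3); lra.
Qed.

Lemma cost_d_between (R : realType) (k : kind R) (x a w : fty k) :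
  kind_ok k -> between_d x a w -> cost_d x w + cost_d w a = cost_d x a.
Proof.
case: k x a w => [T|Xd F] x a w /=.
- move=> _ [->|->]; rewrite /= eqxx ?add0r ?addr0 //.
- rewrite /is_cdf => -[hF _ _ _]; case: x => x hx; case: a => a ha; case: w => w hw /= h.
  apply: abs_mid.
  move: h; case: (leP x a) => xa /andP[h1 h2].
  + rewrite ge_min le_max; apply/andP; split; [apply/orP; left; exact: hF
      | apply/orP; right; exact: hF].
  + rewrite ge_min le_max; apply/andP; split; [apply/orP; right; exact: hF
      | apply/orP; left; exact: hF].
Qed.

Theorem theorem2 (R : realType) (D : nat) (K : 'I_D -> kind R)
    (m : X K -> R) (p : R) (le : X K -> X K -> Prop) (A : X K -> X K) :
  (forall d : 'I_D, kind_ok (K d)) ->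
  (forall x, 0 <= m x <= 1) ->
  1 / 2 <= p ->
  (forall x : X K, exists x' : X K,
      p <= m x' /\ forall y, p <= m y -> cost x x' <= cost x y) ->
  total_order le ->
  is_optimal_cost_alg m p le A ->
  IPF_stable A.
Proof.
move=> Kok _ _ _ [_ leA _ _] HA x w Hw.
set a := A x.
have tri : forall u v z : X K, cost u z <= cost u v + cost v z.
  move=> u v z; rewrite /cost -big_split /=; apply: ler_sum => d _.
  exact: cost_d_tri.
have mid : cost x w + cost w a = cost x a.
  rewrite /cost -big_split /=; apply: eq_bigr => d _.
  apply: cost_d_between; [exact: Kok | exact: Hw].
have [pa mina tiea] := HA x.
have minw : forall y, p <= m y -> cost w a <= cost w y.
  move=> y py; have := mina y py; have := tri x w y; lra.
have tiew : forall y, p <= m y -> cost w y = cost w a -> le a y.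
  move=> y py e; apply: tiea => //; apply/eqP; rewrite eq_le mina // andbT.
  have := tri x w y; lra.
have [pw minw' tiew'] := HA w.
have e : cost w (A w) = cost w a.
  by apply/eqP; rewrite eq_le minw' // minw.
apply: leA; [exact: tiew' | exact: tiew].
Qed.
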